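(* Let $\rho = (\mathcal{V}, V, \mathbf{1}, \mathrm{var}, \mathrm{low}, \mathrm{high}, \mathrm{flip})$ be a COBDD with $\mathcal{V} = \mathcal{X} \,\dot\cup\, \mathcal{U}$, $\mathcal X=\{x_1,\dots,x_n\}$, $\mathcal U=\{u_1,\dots,u_r\}$, let $v \in V$ be a node and $b \in \mathbb{B}$ a flipping bit, and let $[\![ v, b]\!] = K(\mathbf{x}, \mathbf{u})$. Then the procedure SolveFunctionalEq$(\rho, v, b)$ outputs nodes $v_1, \ldots, v_r$ and boolean values $b_1, \ldots, b_r$ such that, writing $f_i(\mathbf x) := [\![ v_i, b_i]\!]$ for $i \in \{1,\dots,r\}$ (each $f_i$ depends only on $\mathbf x$), every $\mathbf{x} \in \mathrm{Dom}(K)$ satisfies $K(\mathbf{x}, f_1(\mathbf{x}), \ldots, f_r(\mathbf{x})) = 1$.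
   Context: $\mathbb{B}=\{0,1\}$; $+$, juxtaposition, $\bar{\ }$, $\oplus$ denote OR, AND, complement, XOR; $f|_{y=g}$ denotes substitution of $g$ for variable $y$ in $f$, and $\exists y\, f := f|_{y=0}+f|_{y=1}$. A COBDD is a tuple $\rho = (\mathcal{V}, V, \mathbf{1}, \mathrm{var}, \mathrm{low}, \mathrm{high}, \mathrm{flip})$ with $\mathcal V$ a finite totally ordered set of boolean variables, $V$ a finite set of nodes, $\mathbf 1\in V$ the terminal node, $\mathrm{var}: V\setminus\{\mathbf 1\}\to\mathcal V$, $\mathrm{high},\mathrm{low}: V\setminus\{\mathbf 1\}\to V$, $\mathrm{flip}: V\setminus\{\mathbf 1\}\to\mathbb B$, with variables strictly increasing along edges $v\to\mathrm{high}(v)$, $v\to\mathrm{low}(v)$; COBDDs are assumed reduced (no internal $v$ with $\mathrm{low}(v)=\mathrm{high}(v)$ and $\mathrm{flip}(v)=0$, and no two distinct nodes whose reachable sub-COBDDs are isomorphic). Semantics: $[\![ \mathbf 1, b]\!] := \bar b$ and, for internal $v$ with $\mathrm{var}(v)=y$, $[\![ v,b]\!] := y [\![ \mathrm{high}(v), b]\!] + \bar y [\![ \mathrm{low}(v), b\oplus \mathrm{flip}(v)]\!]$. Every boolean function is represented as $[\![ w,c]\!]$ for some node $w$ and bit $c$ (the COBDD being extended with new nodes as needed). Two operations are assumed available and correct: COBDD_APP, which given variables $y_1,\dots,y_k$, pairs $(w_1,c_1),\dots,(w_k,c_k)$ and $(w,c)$ returns $(w',c')$ with $[\![ w',c']\!]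 = [\![ w,c]\!]|_{y_1=[\![ w_1,c_1]\!],\dots,y_k=[\![ w_k,c_k]\!]}$; and COBDD_EX, which given variables $y_1,\dots,y_k$ and $(w,c)$ returns $(w',c')$ with $[\![ w',c']\!]=\exists y_1,\dots,y_k\,[\![ w,c]\!]$. The procedure SolveFunctionalEq$(\rho,v,b)$: for $i=1,\dots,r$ in order, it computes $(v_i,b_i)$ := COBDD_EX$(u_{i+1},\dots,u_r,$ COBDD_APP$(u_1,\dots,u_i, v_1,b_1,\dots,v_{i-1},b_{i-1},\mathbf 1,0, v,b))$, i.e. $[\![ v_i,b_i]\!] = \exists u_{i+1},\dots,u_r\, K(\mathbf x, [\![ v_1,b_1]\!],\dots,[\![ v_{i-1},b_{i-1}]\!], 1, u_{i+1},\dots,u_r)$ (note $[\![ \mathbf 1,0]\!]=1$); it returns $\langle v_1,b_1,\dots,v_r,b_r\rangle$. $\mathrm{Dom}(K) = \{\mathbf x \mid \exists \mathbf u\; K(\mathbf x,\mathbf u)=1\}$. *)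

(* Defs.v *)
From mathcomp Require Import all_boot.
Set Implicit Arguments. Unset Strict Implicit. Unset Printing Implicit Defensive.

(* Variables: X = {x_1..x_n} (inl), U = {u_1..u_r} (inr); index j : 'I_r stands for u_(j+1). *)
Definition cvar (n r : nat) := ('I_n + 'I_r)%type.

(* The total order on the variables is
   given by an injective rank into nat.  [one] is the terminal node 1. The
   fields var/low/high/flip are total functions but only meaningful on
   internal nodes (v != one). *)
Record cobdd (n r : nat) := Cobdd {
  cnode : finType;
  crank : cvar n r -> nat;
  cone  : cnode;
  cvarf : cnode -> cvar n r;
  clow  : cnode -> cnode;
  chigh : cnode -> cnode;
  cflip : cnode -> bool
}.
Arguments crank {n r} c _.
Arguments cone {n r} c.
Arguments cvarf {n r} c _.
Arguments clow {n r} c _.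
Arguments chigh {n r} c _.
Arguments cflip {n r} c _.

Section Cobdd.
Variables (n r : nat) (rho : cobdd n r).
Local Notation V := (cnode rho).

Definition ordered : Prop :=
  injective (crank rho) /\
  forall v : V, v != cone rho ->
    (chigh rho v != cone rho ->
       crank rho (cvarf rho v) < crank rho (cvarf rho (chigh rho v))) /\
    (clow rho v != cone rho ->
       crank rho (cvarf rho v) < crank rho (cvarf rho (clow rho v))).

(* Semantics with fuel; fuel #|V| suffices for an ordered COBDD. *)
Fixpoint sem_fuel (k : nat) (v : V) (b : bool) (a : cvar n r -> bool) : bool :=
  if v == cone rho then ~~ b else
  match k with
  | 0 => false
  | k.+1 => if a (cvarf rho v) then sem_fuel k (chigh rho v) b a
            else sem_fuel k (clow rho v) (b (+) cflip rho v) a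
  end.

Definition sem (v : V) (b : bool) (a : cvar n r -> bool) : bool :=
  sem_fuel #|V| v b a.

Fixpoint iso_fuel (k : nat) (u w : V) : bool :=
  if (u == cone rho) || (w == cone rho) then (u == cone rho) && (w == cone rho) else
  match k with
  | 0 => true
  | k.+1 => [&& cvarf rho u == cvarf rho w, cflip rho u == cflip rho w,
               iso_fuel k (chigh rho u) (chigh rho w) &
               iso_fuel k (clow rho u) (clow rho w)]
  end.

Definition reduced : Prop :=
  (forall v : V, v != cone rho -> clow rho v = chigh rho v -> cflip rho v = true) /\
  (forall u w : V, iso_fuel #|V| u w -> u = w).

Definition upd (a : cvar n r -> bool) (y : cvar n r) (t : bool) : cvar n r -> bool :=
  fun z => if z == y then t else a z.

Fixpoint subst_val (ys : seq (cvar n r)) (ts : seq bool) (a : cvar n r -> bool) :=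
  match ys, ts with
  | y :: ys', t :: ts' => upd (subst_val ys' ts' a) y t
  | _, _ => a
  end.

Fixpoint exists_vars (ys : seq (cvar n r)) (f : (cvar n r -> bool) -> bool)
    (a : cvar n r -> bool) : bool :=
  match ys with
  | [::] => f a
  | y :: ys' => exists_vars ys' f (upd a y false) || exists_vars ys' f (upd a y true)
  end.

Definition app_spec (app : seq (cvar n r) -> seq (V * bool) -> V * bool -> V * bool) : Prop :=
  forall (ys : seq (cvar n r)) (ps : seq (V * bool)) (wc : V * bool),
    uniq ys -> size ys = size ps ->
    forall a, sem (app ys ps wc).1 (app ys ps wc).2 a =
              sem wc.1 wc.2 (subst_val ys [seq sem p.1 p.2 a | p <- ps] a).

Definition ex_spec (ex : seq (cvar n r) -> V * bool -> V * bool) : Prop :=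
  forall (ys : seq (cvar n r)) (wc : V * bool), uniq ys ->
    forall a, sem (ex ys wc).1 (ex ys wc).2 a = exists_vars ys (sem wc.1 wc.2) a.

Definition us : seq (cvar n r) := [seq inr j | j <- enum 'I_r].

(* SolveFunctionalEq(rho, v, b): iteration i (1-based) computes
   (v_i,b_i) := EX(u_{i+1..r}, APP(u_1..u_i, (v_1,b_1)..(v_{i-1},b_{i-1}), (1,0), (v,b))). *)
Section Solve.
Variables (app : seq (cvar n r) -> seq (V * bool) -> V * bool -> V * bool)
          (ex : seq (cvar n r) -> V * bool -> V * bool) (v : V) (b : bool).

Definition solve_step (acc : seq (V * bool)) : V * bool :=
  let i := (size acc).+1 in
  ex (drop i us) (app (take i us) (rcons acc (cone rho, false)) (v, b)).

Fixpoint solve_loop (k : nat) (acc : seq (V * bool)) : seq (V * bool) :=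
  match k with
  | 0 => acc
  | k.+1 => solve_loop k (rcons acc (solve_step acc))
  end.

Definition SolveFunctionalEq : seq (V * bool) := solve_loop r [::].
End Solve.

End Cobdd.

Definition join (n r : nat) (x : 'I_n -> bool) (u : 'I_r -> bool) : cvar n r -> bool :=
  fun z => match z with inl i => x i | inr j => u j end.

(* Main.v *)
Require Import Defs.
From mathcomp Require Import all_boot.

Lemma exists_varsP (n r : nat) (ys : seq (cvar n r)) f a :
  (forall a a', (forall z, a z = a' z) -> f a = f a') ->
  exists_vars ys f a <-> exists a', (forall z, z \notin ys -> a' z = a z) /\ f a'.
Proof.
move=> fE; elim: ys a => [|y ys IH] a /=.
  split; first by move=> H; exists a.
  by case=> a' [E H]; rewrite (fE a a') // => z; rewrite E.
split.
  case/orP=> /IH [a' [E H]]; exists a'; split=> // z; rewrite in_cons negb_or => /andP[zy zys];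
    by rewrite E // /upd (negbTE zy).
case=> a' [E H]; apply/orP.
have: exists_vars ys f (upd a y (a' y)).
  apply/IH; exists a'; split=> // z zn; rewrite /upd.
  case: eqP => [->//|/eqP zy]; by rewrite E // in_cons negb_or zy.
by case: (a' y) => ->; [right|left].
Qed.

Lemma sem_fuel_ext (n r : nat) (rho : cobdd n r) k (v : cnode rho) b a a' :
  (forall z, a z = a' z) -> sem_fuel k v b a = sem_fuel k v b a'.
Proof.
move=> E; elim: k v b => [|k IH] v b //=.
by rewrite E !IH.
Qed.

Lemma sem_ext (n r : nat) (rho : cobdd n r) (v : cnode rho) b a a' :
  (forall z, a z = a' z) -> sem v b a = sem v b a'.
Proof. exact: sem_fuel_ext. Qed.

Lemma exists_vars_ext (n r : nat) (ys : seq (cvar n r)) f g a :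
  (forall a, f a = g a) -> exists_vars ys f a = exists_vars ys g a.
Proof. by move=> E; elim: ys a => [|y ys IH] a /=; rewrite ?E ?IH. Qed.

Lemma subst_valE (n r : nat) (ys : seq (cvar n r)) ts a z :
  size ys = size ts ->
  subst_val ys ts a z = if z \in ys then nth false ts (index z ys) else a z.
Proof.
elim: ys ts => [|y ys IH] [|t ts] //= [Es].
rewrite /upd in_cons IH // eq_sym; by case: eqP.
Qed.

Lemma sem_one (n r : nat) (rho : cobdd n r) a : sem (cone rho) false a = true.
Proof. by rewrite /sem; case: #|_| => /= [|k]; rewrite eqxx. Qed.

Lemma uniq_us n r : uniq (us n r).
Proof. by rewrite map_inj_uniq ?enum_uniq // => x y []. Qed.

Lemma size_us n r : size (us n r) = r.
Proof. by rewrite size_map size_enum_ord. Qed.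

Lemma inl_us n r k : (inl k \in us n r) = false.
Proof. by apply/negP => /mapP [j _]. Qed.

Lemma index_us n r (j : 'I_r) : index (inr j) (us n r) = j.
Proof. by rewrite index_map ?index_enum_ord // => x y []. Qed.

Lemma inr_us n r (j : 'I_r) : inr j \in us n r.
Proof. by apply/mapP; exists j; rewrite ?mem_enum. Qed.

Lemma in_take_us n r k z :
  (z \in take k (us n r)) = if z is inr j then j < k else false.
Proof.
case: z => [i|j]; first by apply/negP => /mem_take; rewrite inl_us.
by rewrite in_take ?inr_us // index_us.
Qed.

Lemma in_drop_us n r k z :
  (z \in drop k (us n r)) = if z is inr j then k <= j else false.
Proof.
case: z => [i|j]; first by apply/negP => /mem_drop; rewrite inl_us.
have D : ~~ has (mem (take k (us n r))) (drop k (us n r)).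
  by have := uniq_us n r; rewrite -{1}(cat_take_drop k (us n r)) cat_uniq => /and3P[_ H _].
have M : (inr j \in take k (us n r)) || (inr j \in drop k (us n r)).
  by rewrite -mem_cat cat_take_drop inr_us.
move: M; rewrite in_take_us.
case: (ltnP j k) => jk /=.
  move=> _; apply/negP => Hd; move/hasP: D; apply; exists (inr j) => //.
  by have := in_take_us n r k (inr j); rewrite jk; apply. 
by move=> ->.
Qed.

Lemma index_take_us n r k (j : 'I_r) : j < k -> index (inr j) (take k (us n r)) = j.
Proof.
move=> jk; have := index_us n r j; rewrite -{1}(cat_take_drop k (us n r)) index_cat.
by rewrite in_take_us jk.
Qed.

Lemma solve_loop_spec (n r : nat) (rho : cobdd n r) app ex (v : cnode rho) b k acc :
  let out := solve_loop app ex v b k acc in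
  size out = size acc + k /\ take (size acc) out = acc /\
  forall i, size acc <= i < size acc + k ->
    nth (cone rho, false) out i = solve_step app ex v b (take i out).
Proof.
elim: k acc => [|k IH] acc /=.
  by rewrite addn0 take_size; split=> //; split=> // i; rewrite ltnNge andbN.
have [E1 [E2 E3]] := IH (rcons acc (solve_step app ex v b acc)).
rewrite size_rcons in E1 E2 E3.
set out := solve_loop _ _ _ _ _ _ in E1 E2 E3 *.
have Hp : take (size acc) out = acc.
  by rewrite -(minn_idPl (leqnSn (size acc))) take_min E2 -cats1 take_size_cat.
split; first by rewrite E1 addnS addSn.
split=> // i /andP[H1 H2].
case: (ltngtP (size acc) i) => [Hi|Hi|Hi].
- by apply: E3; rewrite Hi /= addSnnS.
- by rewrite leqNgt Hi in H1.
by rewrite -Hi in H2 *; rewrite Hp -(nth_take _ (ltnSn (size acc))) E2 nth_rcons ltnn eqxx.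
Qed.

Theorem lemma2 (n r : nat) (rho : cobdd n r)
  (app : seq (cvar n r) -> seq (cnode rho * bool) -> cnode rho * bool -> cnode rho * bool)
  (ex : seq (cvar n r) -> cnode rho * bool -> cnode rho * bool)
  (v : cnode rho) (b : bool) :
  ordered rho -> reduced rho -> app_spec app -> ex_spec ex ->
  let out := SolveFunctionalEq app ex v b in
  let K := sem v b in
  let f := fun (i : 'I_r) (a : cvar n r -> bool) =>
             sem (nth (cone rho, false) out i).1 (nth (cone rho, false) out i).2 a in
  size out = r /\
  (forall (i : 'I_r) (x : 'I_n -> bool) (u u' : 'I_r -> bool),
      f i (join x u) = f i (join x u')) /\
  (forall (x : 'I_n -> bool) (u0 : 'I_r -> bool),
      (exists u : 'I_r -> bool, K (join x u)) ->
      K (join x (fun i => f i (join x u0)))).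
Proof.
move=> _ _ Happ Hex out K f.
have [Esz [_ Estep]] := solve_loop_spec n r rho app ex v b r [::].
rewrite /= add0n in Esz Estep.
rewrite -/(SolveFunctionalEq app ex v b) -/out in Esz Estep.
set d := (cone rho, false) in Estep f *.
pose F := fun (i : nat) a => sem (nth d out i).1 (nth d out i).2 a.
pose ts := fun i a' => rcons [seq sem p.1 p.2 a' | p <- take i out] true.
have nth_ts : forall i a' j, i < r -> nth false (ts i a') j =
    if j < i then F j a' else (j == i).
  move=> i a' j ir; rewrite /ts nth_rcons size_map size_take Esz ir.
  case: ltnP => ji; last by case: eqP.
  by rewrite (nth_map d) ?size_take ?Esz ?ir // nth_take.
have size_ts : forall i a', i < r -> size (ts i a') = i.+1.
  by move=> i a' ir; rewrite size_rcons size_map size_take Esz ir.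
have Fstep : forall i, i < r -> forall a,
  F i a = exists_vars (drop i.+1 (us n r))
     (fun a' => K (subst_val (take i.+1 (us n r)) (ts i a') a')) a.
  move=> i ir a; rewrite /F Estep ?ir // /solve_step size_take Esz ir Hex ?drop_uniq ?uniq_us //.
  apply: exists_vars_ext => a'.
  rewrite Happ ?take_uniq ?uniq_us ?size_takel ?size_rcons ?size_take ?Esz ?ir ?size_us //.
  by rewrite /ts map_rcons sem_one.
have Esub : forall i a' z, i < r ->
    subst_val (take i.+1 (us n r)) (ts i a') a' z =
    if z is inr j then (if j < i then F j a' else if j == i :> nat then true else a' z) else a' z.
  move=> i a' z ir; rewrite subst_valE; last first.
    by rewrite size_ts // size_takel // size_us.
  rewrite in_take_us; case: z => [k|j] //.
  rewrite ltnS leq_eqVlt; case: ltnP => ji.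
    by rewrite orbT index_take_us ?ltnS 1?ltnW // nth_ts // ji.
  case: eqP => [ji'|] //=.
  rewrite index_take_us; last by rewrite ji'.
  rewrite nth_ts //; case: ltnP => h; [by rewrite ltnNge ji in h | by apply/eqP].
pose Dp := fun i => forall a1 a2 : cvar n r -> bool,
  (forall k, a1 (inl k) = a2 (inl k)) -> F i a1 = F i a2.
have Kext : forall a1 a2, (forall z, a1 z = a2 z) -> K a1 = K a2.
  by move=> a1 a2 E; apply: sem_ext.
have S : forall i, i < r -> (forall j, j < i -> Dp j) -> forall a,
   F i a <-> exists a', (forall k, a' (inl k) = a (inl k)) /\
     (forall j : 'I_r, j < i -> a' (inr j) = F j a) /\
     (forall j : 'I_r, j = i :> nat -> a' (inr j)) /\ K a'.
  move=> i ir HD a; rewrite Fstep //; refine (iff_trans (exists_varsP _ _ _ _ _ _) _).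
    move=> a1 a2 E; apply: Kext => z; rewrite !Esub //; case: z => [k|j]; first exact: E.
    case: ifP => _; first exact: sem_ext.
    by case: ifP => _; rewrite ?E.
  split.
    case=> a'' [E H].
    exists (subst_val (take i.+1 (us n r)) (ts i a'') a''); split.
      by move=> k; rewrite Esub // E // in_drop_us.
    split.
      move=> j ji; rewrite Esub // ji; apply: HD => // k; apply: E; by rewrite in_drop_us.
    split; last by [].
    by move=> j ji; rewrite Esub // ji ltnn eqxx.
  case=> a' [E1 [E2 [E3 E4]]].
  exists (fun z => if z \in drop i.+1 (us n r) then a' z else a z); split.
    by move=> z /negbTE ->.
  rewrite (Kext _ a') // => z; rewrite Esub //.
  case: z => [k|j]; first by rewrite in_drop_us E1.
  rewrite in_drop_us; case: ltnP => ji.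
    rewrite E2 //; apply: HD => // k; by rewrite in_drop_us.
  case: eqP => [ji'|/eqP ji']; first by rewrite E3.
  by rewrite ltn_neqAle eq_sym ji' ji.
have D : forall i, i < r -> Dp i.
  elim/ltn_ind => i IH ir a1 a2 E.
  have HD : forall j, j < i -> Dp j := fun j ji => IH j ji (ltn_trans ji ir).
  apply/idP/idP => /(S i ir HD) [a' [E1 [E2 [E3 E4]]]]; apply/(S i ir HD); exists a'.
    split; first by move=> k; rewrite E1 E.
    split=> // j ji; rewrite E2 //; exact: HD.
  split; first by move=> k; rewrite E1 E.
  split=> // j ji; rewrite E2 //; symmetry; exact: HD.
split; first done.
split.
  by move=> i x u u'; apply: (D i (ltn_ord i)).
move=> x u0 [u Hu].
set a0 := join x u0.
have P : forall i, i <= r -> exists u, K (join x u) /\ forall j : 'I_r, j < i -> u j = F j a0.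
  elim=> [|i IH] ir; first by exists u.
  have ir' : i < r := ir.
  have [w [Kw Ew]] := IH (ltnW ir).
  have HD : forall j, j < i -> Dp j := fun j ji => D j (ltn_trans ji ir').
  case Fi: (F i a0).
  - have [a' [E1 [E2 [E3 E4]]]] := (S i ir' HD a0).1 Fi.
    exists (fun j => a' (inr j)); split.
      by rewrite (Kext _ a') // => [[k|j]] //=; rewrite E1.
    move=> j; rewrite ltnS leq_eqVlt; case/orP => [/eqP ji|ji]; last exact: E2.
    by rewrite E3 // ji Fi.
  - exists w; split=> // j; rewrite ltnS leq_eqVlt; case/orP => [/eqP ji|]; last exact: Ew.
    rewrite ji Fi; apply/negbTE/negP => wj.
    suff : F i a0 by rewrite Fi.
    apply/(S i ir' HD a0); exists (join x w); split=> //; split; first exact: Ew.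
    split=> // j' j'i.
    have -> : j' = j by apply: val_inj; rewrite /= j'i ji.
    exact: wj.
have [w [Kw Ew]] := P r (leqnn r).
by rewrite (Kext _ (join x w)) // => [[k|j]] //=; rewrite Ew.
Qed.
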